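(* Let $I$ be a ProbeTop-$k$ instance and let $(x,y)$ be a basic feasible solution of $\mathrm{LP}_{\mathtt{ptk}}(I)$. Then at most two components of $y=(y_i)_{i\in[n]}$ lie strictly between $0$ and $1$, and if exactly two components $y_{i_1},y_{i_2}$ are non-integral, then $y_{i_1}+y_{i_2}=1$.
   Context: $\mathrm{LP}_{\mathtt{ptk}}(I)$ for integers $1\le k\le T\le n$, values $r_1,\dots,r_J\ge 0$ and probabilities $q_{ij}\in[0,1]$ ($i\in[n],j\in[J]$, $\sum_j q_{ij}=1$) is the linear program in variables $x_{ij},y_i$: maximize $\sum_{i,j} r_j x_{ij}$ subject to $x_{ij}\le y_i q_{ij}$ for all $i,j$; $\sum_i y_i\le T$; $\sum_{i,j}x_{ij}\le k$; $x_{ij}\ge 0$; $0\le y_i\le 1$. *)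

(* Defs.v *)
From mathcomp Require Import all_boot all_order all_algebra.
Set Implicit Arguments. Unset Strict Implicit. Unset Printing Implicit Defensive.
Import Order.TTheory GRing.Theory Num.Theory.
Local Open Scope ring_scope.

Definition ptk_instance (R : realFieldType) (n J k T : nat)
  (r : 'I_J -> R) (q : 'I_n -> 'I_J -> R) : Prop :=
  [/\ [/\ (1 <= k)%N, (k <= T)%N & (T <= n)%N],
      (forall j, 0 <= r j),
      (forall i j, 0 <= q i j <= 1) &
      (forall i, \sum_(j < J) q i j = 1)].

Definition ptk_feasible (R : realFieldType) (n J k T : nat)
  (q : 'I_n -> 'I_J -> R) (x : 'I_n -> 'I_J -> R) (y : 'I_n -> R) : Prop :=
  [/\ (forall i j, x i j <= y i * q i j),
      \sum_(i < n) y i <= T%:R,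
      \sum_(i < n) \sum_(j < J) x i j <= k%:R,
      (forall i j, 0 <= x i j) &
      (forall i, 0 <= y i <= 1)].

(* Basic feasible solution: (x,y) is feasible and the constraints that are
   tight at (x,y) have full rank, i.e. the only direction (dx,dy) annihilated
   by the linear parts of all tight constraints is zero. *)
Definition ptk_bfs (R : realFieldType) (n J k T : nat)
  (q : 'I_n -> 'I_J -> R) (x : 'I_n -> 'I_J -> R) (y : 'I_n -> R) : Prop :=
  ptk_feasible k T q x y /\
  forall (dx : 'I_n -> 'I_J -> R) (dy : 'I_n -> R),
    (forall i j, x i j = y i * q i j -> dx i j = dy i * q i j) ->
    (\sum_(i < n) y i = T%:R -> \sum_(i < n) dy i = 0) ->
    (\sum_(i < n) \sum_(j < J) x i j = k%:R ->
       \sum_(i < n) \sum_(j < J) dx i j = 0) ->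
    (forall i j, x i j = 0 -> dx i j = 0) ->
    (forall i, y i = 0 -> dy i = 0) ->
    (forall i, y i = 1 -> dy i = 0) ->
    (forall i j, dx i j = 0) /\ (forall i, dy i = 0).

(* Main.v *)
Require Import Defs.
From mathcomp Require Import all_boot all_order all_algebra.
From mathcomp Require Import ring lra zify.
Import Order.TTheory GRing.Theory Num.Theory.
Local Open Scope ring_scope.

Section Aux.
Variables (R : realFieldType) (n J k T : nat)
  (q : 'I_n -> 'I_J -> R) (x : 'I_n -> 'I_J -> R) (y : 'I_n -> R).

Definition cc (i : 'I_n) : R :=
  \sum_(j < J) (if x i j == y i * q i j then q i j else 0).

Lemma key : ptk_bfs k T q x y -> forall dy : 'I_n -> R,
  (forall i, ~~ (0 < y i < 1) -> dy i = 0) ->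
  \sum_(i < n) dy i = 0 ->
  \sum_(i < n) dy i * cc i = 0 ->
  forall i, dy i = 0.
Proof.
move=> [Hf Hb] dy Hsupp Hs Hc.
have Hfr : forall i, 0 <= y i <= 1 by case: Hf.
pose dx i j := if x i j == y i * q i j then dy i * q i j else 0.
have := Hb dx dy.
case.
- by move=> i j E; rewrite /dx E eqxx.
- by [].
- move=> _; rewrite -[RHS]Hc; apply: eq_bigr => i _.
  rewrite /cc mulr_sumr; apply: eq_bigr => j _; rewrite /dx.
  by case: ifP => _; rewrite ?mulr0.
- move=> i j E; rewrite /dx; case: eqP => // E2.
  move: E2; rewrite E => /esym /eqP; rewrite mulf_eq0 => /orP [] /eqP Z.
    by rewrite Hsupp ?mul0r // Z ltxx.
  by rewrite Z mulr0.
- by move=> i Z; apply: Hsupp; rewrite Z ltxx.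
- by move=> i Z; apply: Hsupp; rewrite Z ltxx andbF.
- by [].
Qed.

Lemma sum_delta (w : 'I_n -> R) (a : 'I_n) (v : R) :
  \sum_(i < n) (v * (i == a)%:R) * w i = v * w a.
Proof.
rewrite (bigD1 a) //= eqxx mulr1 big1 ?addr0 // => i /negbTE ->.
by rewrite mulr0 mul0r.
Qed.

Lemma three_frac : ptk_bfs k T q x y -> forall a b c : 'I_n,
  a != b -> a != c -> b != c ->
  0 < y a < 1 -> 0 < y b < 1 -> 0 < y c < 1 -> False.
Proof.
move=> Hbfs a b c ab ac bc Ha Hb Hc.
pose ca := cc a; pose cb := cc b; pose cv := cc c.
have gen : forall v1 v2 v3 : R, v1 + v2 + v3 = 0 ->
    v1 * ca + v2 * cb + v3 * cv = 0 -> v1 = 0 /\ v2 = 0 /\ v3 = 0.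
  move=> v1 v2 v3 E1 E2.
  pose dy i := v1 * (i == a)%:R + v2 * (i == b)%:R + v3 * (i == c)%:R.
  have sw : forall w : 'I_n -> R, \sum_(i < n) dy i * w i = v1 * w a + v2 * w b + v3 * w c.
    move=> w; rewrite -!sum_delta -!big_split /=; apply: eq_bigr => i _.
    by rewrite /dy !mulrDl.
  have := @key Hbfs dy.
  have H1 : forall i, ~~ (0 < y i < 1) -> dy i = 0.
    move=> i Hi; rewrite /dy.
    have -> : (i == a) = false by apply/eqP => E; move: Hi; rewrite E Ha.
    have -> : (i == b) = false by apply/eqP => E; move: Hi; rewrite E Hb.
    have -> : (i == c) = false by apply/eqP => E; move: Hi; rewrite E Hc.
    by rewrite !mulr0 !addr0.
  have H2 : \sum_(i < n) dy i = 0.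
    rewrite (eq_bigr (fun i => dy i * 1)); last by move=> i _; rewrite mulr1.
    by rewrite sw !mulr1.
  have H3 : \sum_(i < n) dy i * cc i = 0 by rewrite sw.
  move=> /(_ H1 H2 H3) Z.
  move: (Z a) (Z b) (Z c); rewrite /dy !eqxx.
  rewrite eq_sym in ab; rewrite eq_sym in ac; rewrite eq_sym in bc.
  rewrite (negbTE ab) (negbTE ac) (negbTE bc).
  rewrite eq_sym in ab; rewrite eq_sym in ac; rewrite eq_sym in bc.
  rewrite (negbTE ab) (negbTE ac) (negbTE bc).
  rewrite !mulr0 !mulr1 !addr0 !add0r; tauto.
case: (eqVneq ca cb) => E.
  have [] := gen 1 (-1) 0; first by ring.
    by rewrite E; ring.
  move=> /eqP; rewrite oner_eq0 //.
have [//|//|_ [_ /eqP]] := gen (cb - cv) (cv - ca) (ca - cb); try ring.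
by rewrite subr_eq0 (negbTE E).
Qed.

End Aux.

Theorem lemma4p2 (R : realFieldType) (n J k T : nat)
  (r : 'I_J -> R) (q : 'I_n -> 'I_J -> R)
  (x : 'I_n -> 'I_J -> R) (y : 'I_n -> R) :
  ptk_instance k T r q ->
  ptk_bfs k T q x y ->
  (#|[set i | (0 < y i < 1)%R]| <= 2)%N /\
  (#|[set i | (0 < y i < 1)%R]| = 2%N ->
     forall i1 i2 : 'I_n, i1 != i2 ->
       0 < y i1 < 1 -> 0 < y i2 < 1 -> y i1 + y i2 = 1).
Proof.
move=> _ Hbfs.
have Hfr : forall i, 0 <= y i <= 1 by case: Hbfs => -[].
set S := [set i | 0 < y i < 1].
split.
  rewrite leqNgt; apply/negP => H3.
  have /card_gt0P [a aS] : (0 < #|S|)%N by lia.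
  have : (1 < #|S :\ a|)%N by move: H3; rewrite (cardsD1 a S) aS; lia.
  move=> H2; have /card_gt0P [b bS] : (0 < #|S :\ a|)%N by lia.
  have : (0 < #|S :\ a :\ b|)%N by move: H2; rewrite (cardsD1 b (S :\ a)) bS; lia.
  move=> /card_gt0P [c cS].
  move: aS bS cS; rewrite !inE => Ha /andP [ba Hb] /and3P [cb ca Hc].
  by apply: (@three_frac _ _ _ _ _ _ _ _ Hbfs a b c) => //; rewrite eq_sym.
move=> _ i1 i2 n12 H1 H2.
have others : forall i, i != i1 -> i != i2 -> (y i == 0) || (y i == 1).
  move=> i ni1 ni2.
  have : ~~ (0 < y i < 1).
    by apply/negP => Hi; apply: (@three_frac _ _ _ _ _ _ _ _ Hbfs _ _ _ n12 _ _ H1 H2 Hi); rewrite eq_sym.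
  have := Hfr i; rewrite !le_eqVlt => /andP [/orP [/eqP <-|->] /orP [->|->]] //=;
    rewrite ?eqxx ?orbT //.
case: (eqVneq (\sum_(i < n) y i) T%:R) => Hs.
  move: Hs; rewrite (bigD1 i1) //= (bigD1 i2) /=; last by rewrite eq_sym.
  rewrite (eq_bigr (fun i => ((y i == 1) : nat)%:R)); last first.
    move=> i /andP [ni1 ni2]; have /orP [/eqP ->|/eqP ->] := others i ni1 ni2.
      by rewrite eq_sym oner_eq0.
    by rewrite eqxx.
  rewrite -natr_sum; set m := (\sum_(_ | _) _)%N => Hs.
  case: (leqP m T) => HmT.
    have E : y i1 + y i2 = (T - m)%:R by rewrite natrB // -Hs; ring.
    move: H1 H2 => /andP [H1a H1b] /andP [H2a H2b].
    have h0 : (0 : R) < (T - m)%:R by rewrite -E; lra.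
    have h2 : ((T - m)%:R : R) < 2%:R by rewrite -E; lra.
    move: h0 h2; rewrite ltr0n ltr_nat => h0 h2.
    have Hm : (T - m = 1)%N by lia.
    by rewrite E Hm.
  have : (T%:R : R) < m%:R by rewrite ltr_nat.
  move: H1 H2 => /andP [H1a H1b] /andP [H2a H2b]; lra.
exfalso.
pose c1 := @cc _ _ _ q x y i1; pose c2 := @cc _ _ _ q x y i2.
have gen : forall v1 v2 : R, v1 * c1 + v2 * c2 = 0 -> v1 = 0 /\ v2 = 0.
  move=> v1 v2 E.
  pose dy i := v1 * (i == i1)%:R + v2 * (i == i2)%:R.
  have sw : forall w : 'I_n -> R, \sum_(i < n) dy i * w i = v1 * w i1 + v2 * w i2.
    move=> w; rewrite -!sum_delta -!big_split /=; apply: eq_bigr => i _.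
    by rewrite /dy !mulrDl.
  case: Hbfs => Hf Hb.
  pose dx i j := if x i j == y i * q i j then dy i * q i j else 0.
  have := Hb dx dy.
  have Hsupp : forall i, ~~ (0 < y i < 1) -> dy i = 0.
    move=> i Hi; rewrite /dy.
    have -> : (i == i1) = false by apply/eqP => E'; move: Hi; rewrite E' H1.
    have -> : (i == i2) = false by apply/eqP => E'; move: Hi; rewrite E' H2.
    by rewrite !mulr0 !addr0.
  case.
  - by move=> i j E'; rewrite /dx E' eqxx.
  - by move=> /eqP; rewrite (negbTE Hs).
  - move=> _; rewrite -[RHS]E /c1 /c2 -(sw (@cc _ _ _ q x y)); apply: eq_bigr => i _.
    rewrite /cc mulr_sumr; apply: eq_bigr => j _; rewrite /dx.
    by case: ifP => _; rewrite ?mulr0.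
  - move=> i j E'; rewrite /dx; case: eqP => // E2.
    move: E2; rewrite E' => /esym /eqP; rewrite mulf_eq0 => /orP [] /eqP Z.
      by rewrite Hsupp ?mul0r // Z ltxx.
    by rewrite Z mulr0.
  - by move=> i Z; apply: Hsupp; rewrite Z ltxx.
  - by move=> i Z; apply: Hsupp; rewrite Z ltxx andbF.
  move=> _ Z; move: (Z i1) (Z i2); rewrite /dy !eqxx.
  rewrite (negbTE n12) eq_sym (negbTE n12).
  rewrite !mulr0 !mulr1 !addr0 !add0r; tauto.
case: (eqVneq c1 0) => E.
  have [] := gen 1 0; first by rewrite E; ring.
  by move=> /eqP; rewrite oner_eq0.
have Eq : c2 * c1 + - c1 * c2 = 0 by ring.
have [_ /eqP] := gen c2 (- c1) Eq.
by rewrite oppr_eq0 (negbTE E).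
Qed.
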